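(* Every tiling system is sofic; that is, for every finite collection $\mathcal P$ of prototiles, $\sigma:T(\mathcal P)\to T(\mathcal P)$ is a sofic system.
   Context: A prototile is a finite nonempty subset of $\mathbb Z$ with minimum $0$. For a finite collection $\mathcal P=\{P_1,\dots,P_K\}$ of prototiles, a tiling of $\mathbb Z$ by $\mathcal P$ is an expression $\mathbb Z=\bigcup_j(t_j+P_{k_j})$ as a disjoint union of translates of prototiles; it corresponds to the point $x\in\{1,\dots,K\}^{\mathbb Z}$ with $x_i=k$ iff $i\in t_j+P_{k_j}$ for some $j$ with $k_j=k$. $T(\mathcal P)$ is the set of all such points and $\sigma$ is the shift $(\sigma x)_i=x_{i+1}$; $\sigma:T(\mathcal P)\to T(\mathcal P)$ is called a tiling system. *)

(* Defs.v *)
From Stdlib Require Import ZArith List.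
Import ListNotations.
Open Scope Z_scope.

(* A prototile: a finite nonempty subset of Z with minimum 0, given by a list
   of its elements. *)
Definition prototile (P : list Z) : Prop :=
  In 0 P /\ forall p, In p P -> 0 <= p.

(* The k-th prototile of the collection, k = 1..K (1-based as in the paper). *)
Definition tile (PP : list (list Z)) (k : nat) : list Z := nth (k - 1) PP [].

(* A tiling of Z by PP: a set S of placements (t,k) (translate t + P_k) such
   that every integer lies in exactly one placed tile (disjoint union
   covering Z). *)
Definition is_tiling (PP : list (list Z)) (S : Z -> nat -> Prop) : Prop :=
  (forall t k, S t k -> (1 <= k <= length PP)%nat) /\
  (forall i : Z, exists t k, S t k /\ In (i - t) (tile PP k) /\
     forall t' k', S t' k' -> In (i - t') (tile PP k') -> t' = t /\ k' = k).

Definition tiling_point (PP : list (list Z)) (S : Z -> nat -> Prop)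
  (x : Z -> nat) : Prop :=
  forall i t k, S t k -> In (i - t) (tile PP k) -> x i = k.

Definition tiling_space (PP : list (list Z)) (x : Z -> nat) : Prop :=
  exists S, is_tiling PP S /\ tiling_point PP S x.

(* Sofic shift (Lind–Marcus): the set of label sequences of bi-infinite
   walks in a finite labeled directed graph.  The graph is a finite list of
   labeled edges (source, target, label). *)
Definition edge_src (e : nat * nat * nat) : nat := fst (fst e).
Definition edge_tgt (e : nat * nat * nat) : nat := snd (fst e).
Definition edge_lab (e : nat * nat * nat) : nat := snd e.

Definition sofic (X : (Z -> nat) -> Prop) : Prop :=
  exists E : list (nat * nat * nat),
    forall x : Z -> nat,
      X x <->
      exists w : Z -> nat * nat * nat,
        (forall i, In (w i) E) /\
        (forall i, edge_tgt (w i) = edge_src (w (i + 1))) /\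
        (forall i, x i = edge_lab (w i)).

(* Main.v *)
Require Import Defs.
From Stdlib Require Import ZArith List Lia Classical ClassicalEpsilon.
Import ListNotations.
Open Scope Z_scope.

Fixpoint maxZ (l : list Z) : Z := match l with [] => 0 | x :: r => Z.max x (maxZ r) end.
Lemma maxZ_ge l p : In p l -> p <= maxZ l.
Proof.
  induction l; simpl; intros H; [contradiction|].
  destruct H as [->|H]; [lia| specialize (IHl H); lia].
Qed.

Definition Dval PP := Z.to_nat (maxZ (concat PP)).

Lemma tile_bound PP (HP: forall P, In P PP -> prototile P) k p :
  In p (tile PP k) -> 0 <= p <= Z.of_nat (Dval PP).
Proof.
  unfold tile. intros H. destruct (Nat.lt_ge_cases (k-1) (length PP)) as [Hl|Hl].
  - pose proof (nth_In PP [] Hl) as Hin. split. apply (proj2 (HP _ Hin)); auto.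
    assert (p <= maxZ (concat PP)) by (apply maxZ_ge; apply in_concat; eauto).
    unfold Dval; lia.
  - rewrite nth_overflow in H by lia. destruct H.
Qed.

Lemma tile_zero PP (HP: forall P, In P PP -> prototile P) k :
  (1 <= k <= length PP)%nat -> In 0 (tile PP k).
Proof.
  intros Hk. unfold tile. apply HP. apply nth_In. lia.
Qed.

Fixpoint all_lists (K n : nat) : list (list nat) :=
  match n with
  | O => [[]]
  | Datatypes.S n => flat_map (fun l => map (fun v => v :: l) (seq 0 (Datatypes.S K))) (all_lists K n)
  end.

Lemma all_lists_in K n l : length l = n -> (forall v, In v l -> (v <= K)%nat) -> In l (all_lists K n).
Proof.
  revert l; induction n; intros l Hl Hv; destruct l as [|v l]; simpl in Hl; try discriminate.
  simpl; auto.
  cbn [all_lists]. apply in_flat_map. exists l. split.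
  - apply IHn; [lia| intros; apply Hv; simpl; auto].
  - apply (in_map (fun v0 => v0 :: l)). apply in_seq. specialize (Hv v (or_introl eq_refl)); lia.
Qed.

Section Main.
Variable PP : list (list Z).
Hypothesis HP : forall P, In P PP -> prototile P.

Definition K := length PP.
Definition D := Dval PP.
Definition L := all_lists K (Datatypes.S D).
Definition N := length L.

Definition ValidS (la lb : list nat) (l : nat) : Prop :=
  (forall o, (o < D)%nat -> nth (Datatypes.S o) lb 0%nat = nth o la 0%nat) /\
  (forall o, (o <= D)%nat -> (nth o la 0%nat <= K)%nat) /\
  (exists o, (o <= D)%nat /\ nth o la 0%nat = l /\ l <> 0%nat /\ In (Z.of_nat o) (tile PP l)) /\
  (forall o o', (o <= D)%nat -> (o' <= D)%nat -> nth o la 0%nat <> 0%nat ->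
     In (Z.of_nat o) (tile PP (nth o la 0%nat)) -> nth o' la 0%nat <> 0%nat ->
     In (Z.of_nat o') (tile PP (nth o' la 0%nat)) -> o = o').

Definition Valid (e : nat * nat * nat) : Prop :=
  ValidS (nth (edge_src e) L []) (nth (edge_tgt e) L []) (edge_lab e).

Definition triples := list_prod (list_prod (seq 0 N) (seq 0 N)) (seq 0 (Datatypes.S K)).

Definition E := filter (fun e => if excluded_middle_informative (Valid e) then true else false) triples.

Lemma E_in e : In e E <-> In e triples /\ Valid e.
Proof.
  unfold E. rewrite filter_In.
  destruct (excluded_middle_informative (Valid e)); intuition; discriminate.
Qed.

Lemma back x w : (forall i, In (w i) E) -> (forall i, edge_tgt (w i) = edge_src (w (i+1))) ->
  (forall i, x i = edge_lab (w i)) -> tiling_space PP x.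
Proof.
  intros Hin Hch Hlab.
  set (st := fun i => nth (edge_src (w i)) L []).
  assert (HV : forall i, ValidS (st i) (st (i+1)) (x i)).
  { intro i. pose proof (proj2 (proj1 (E_in _) (Hin i))) as H. unfold Valid in H.
    rewrite Hch, <- Hlab in H. exact H. }
  assert (Key : forall o i, (o <= D)%nat -> nth o (st i) 0%nat = nth 0 (st (i - Z.of_nat o)) 0%nat).
  { induction o; intros i Ho.
    - simpl. rewrite Z.sub_0_r; auto.
    - destruct (HV (i-1)) as [Hc _]. assert (Hc' := Hc o ltac:(lia)).
      replace (i - 1 + 1) with i in Hc' by lia. rewrite Hc'. rewrite IHo by lia.
      replace (i - 1 - Z.of_nat o) with (i - Z.of_nat (Datatypes.S o)) by lia. reflexivity. }
  set (Sp := fun t k => k <> 0%nat /\ nth 0 (st t) 0%nat = k).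
  assert (Claim : forall i, exists o, (o <= D)%nat /\ Sp (i - Z.of_nat o) (x i) /\
     In (i - (i - Z.of_nat o)) (tile PP (x i)) /\
     forall t k, Sp t k -> In (i - t) (tile PP k) -> t = i - Z.of_nat o /\ k = x i).
  { intro i. destruct (HV i) as [_ [Hle [[o [Ho [Hno [Hnz Hino]]]] Hu]]].
    exists o. split; [exact Ho|]. split.
    { split; auto. rewrite <- Key by lia. auto. }
    split. { replace (i - (i - Z.of_nat o)) with (Z.of_nat o) by lia. auto. }
    intros t k [Hk Ht] Hi.
    pose proof (tile_bound PP HP _ _ Hi) as Hb.
    set (o' := Z.to_nat (i - t)).
    assert (Ho' : nth o' (st i) 0%nat = k).
    { rewrite Key by (unfold o', D; lia). replace (i - Z.of_nat o') with t by (unfold o'; lia). auto. }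
    assert (o = o').
    { apply Hu; auto. unfold o', D in *; lia. rewrite Hno; auto. rewrite Hno; auto.
      rewrite Ho'; auto. rewrite Ho'. unfold o'. rewrite Z2Nat.id by lia. auto. }
    split. unfold o' in *; lia. rewrite <- Ho', <- H. auto. }
  exists Sp. split; [split|].
  - intros t k [Hk Ht]. destruct (HV t) as [_ [Hle _]]. specialize (Hle 0%nat). unfold K in Hle.
    split; [lia|]. rewrite <- Ht. apply Hle. lia.
  - intro i. destruct (Claim i) as [o [Ho [HS [Hi Hu]]]]. exists (i - Z.of_nat o), (x i). auto.
  - intros i t k HS Hi. destruct (Claim i) as [o [Ho [_ [_ Hu]]]]. symmetry; apply (Hu t k HS Hi).
Qed.

Lemma fwd x : tiling_space PP x -> exists w : Z -> nat * nat * nat,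
  (forall i, In (w i) E) /\ (forall i, edge_tgt (w i) = edge_src (w (i + 1))) /\
  (forall i, x i = edge_lab (w i)).
Proof.
  intros [T [[Hb Hcov] Hpt]].
  set (cho := fun t => match excluded_middle_informative (exists k, T t k) with
     | left H => proj1_sig (constructive_indefinite_description _ H) | right _ => 0%nat end).
  assert (cho_spec : forall t k, T t k -> cho t = k).
  { intros t k Hk. unfold cho. destruct (excluded_middle_informative _) as [H|H]; [|exfalso; eauto].
    destruct (constructive_indefinite_description _ H) as [k' Hk']. simpl.
    destruct (Hcov t) as [t0 [k0 [_ [_ Hu]]]].
    assert (A1 := Hu t k Hk). assert (A2 := Hu t k' Hk').
    rewrite Z.sub_diag in A1, A2.
    assert (Z1 : In 0 (tile PP k)) by (apply tile_zero; [exact HP | exact (Hb t k Hk)]).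
    assert (Z2 : In 0 (tile PP k')) by (apply tile_zero; [exact HP | exact (Hb t k' Hk')]).
    destruct (A1 Z1) as [_ B1]. destruct (A2 Z2) as [_ B2]. congruence. }
  assert (cho_nz : forall t, cho t <> 0%nat -> T t (cho t)).
  { intros t Ht. unfold cho in *. destruct (excluded_middle_informative _) as [H|H]; [|contradiction].
    destruct (constructive_indefinite_description _ H); simpl; auto. }
  assert (cho_le : forall t, (cho t <= K)%nat).
  { intro t. destruct (Nat.eq_dec (cho t) 0) as [->|H]; [lia|]. pose proof (Hb _ _ (cho_nz t H)); unfold K; lia. }
  set (st := fun i => map (fun o => cho (i - Z.of_nat o)) (seq 0 (Datatypes.S D))).
  assert (nth_st : forall i o, (o <= D)%nat -> nth o (st i) 0%nat = cho (i - Z.of_nat o)).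
  { intros i o Ho. unfold st.
    assert (HH := map_nth (fun o => cho (i - Z.of_nat o)) (seq 0 (Datatypes.S D)) 0%nat o).
    cbv beta in HH. rewrite seq_nth in HH by lia.
    rewrite (nth_indep _ 0%nat (cho (i - Z.of_nat 0))) by (rewrite length_map, length_seq; lia).
    rewrite HH. reflexivity. }
  assert (st_in : forall i, exists a, (a < N)%nat /\ nth a L [] = st i).
  { intro i. apply In_nth. apply all_lists_in.
    - unfold st. rewrite length_map, length_seq. reflexivity.
    - intros v Hv. unfold st in Hv. apply in_map_iff in Hv. destruct Hv as [o [<- _]]. apply cho_le. }
  set (idx := fun i => proj1_sig (constructive_indefinite_description _ (st_in i))).
  assert (idx_spec : forall i, (idx i < N)%nat /\ nth (idx i) L [] = st i).
  { intro i. unfold idx. destruct (constructive_indefinite_description _ (st_in i)); simpl; auto. }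
  exists (fun i => (idx i, idx (i+1), x i)). split; [|split; intro i; reflexivity].
  intro i. apply E_in. destruct (Hcov i) as [t [k [Hk [Hi Hu]]]].
  assert (Hx : x i = k) by (eapply Hpt; eauto).
  pose proof (Hb _ _ Hk) as Hkb. pose proof (tile_bound PP HP _ _ Hi) as Htb.
  split.
  - unfold triples. apply in_prod_iff. split; [apply in_prod_iff; split|]; apply in_seq.
    + pose proof (idx_spec i); lia.
    + pose proof (idx_spec (i+1)); lia.
    + unfold K; lia.
  - unfold Valid, edge_src, edge_tgt, edge_lab. simpl. rewrite (proj2 (idx_spec i)), (proj2 (idx_spec (i+1))).
    split; [|split; [|split]].
    + intros o Ho. rewrite !nth_st by lia. f_equal. lia.
    + intros o Ho. rewrite nth_st by lia. apply cho_le.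
    + exists (Z.to_nat (i - t)). unfold D in *. split; [lia|].
      rewrite nth_st by (unfold D; lia). replace (i - Z.of_nat (Z.to_nat (i - t))) with t by lia.
      rewrite (cho_spec _ _ Hk), Hx. split; auto. split; [lia|].
      rewrite Z2Nat.id by lia. auto.
    + intros o o' Ho Ho' Hn1 Hi1 Hn2 Hi2. rewrite nth_st in * by lia.
      apply cho_nz in Hn1, Hn2.
      assert (R1 : Z.of_nat o = i - (i - Z.of_nat o)) by lia.
      assert (R2 : Z.of_nat o' = i - (i - Z.of_nat o')) by lia.
      rewrite R1 in Hi1 at 1. rewrite R2 in Hi2 at 1.
      destruct (Hu _ _ Hn1 Hi1) as [E1 _]. destruct (Hu _ _ Hn2 Hi2) as [E2 _]. lia.
Qed.

End Main.

Theorem mainTheorem4 (PP : list (list Z)) :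
  (forall P, In P PP -> prototile P) ->
  sofic (tiling_space PP).
Proof.
  intros HP. exists (E PP). intro x. split.
  - apply fwd; auto.
  - intros [w [H1 [H2 H3]]]. eapply back; eauto.
Qed.
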